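(* Let $\mathcal{A}$ be a central and essential arrangement in $\mathbb{Q}^l$ as in the context, let $\sigma$ be a term ordering, $p$ a prime, and $1\le i<j\le n$. If $(\alpha_i)_p=\beta(\alpha_j)_p$ for some $\beta\in\mathbb{F}_p\setminus\{0\}$, then $p$ is not $\sigma$-lucky for the ideal $\langle\alpha_i,\alpha_j\rangle\subseteq\mathbb{Z}[x_1,\dots,x_l]$.
   Context: $\mathcal{A}=\{H_1,\dots,H_n\}$: $n$ distinct linear hyperplanes in $\mathbb{Q}^l$ with $\bigcap H_i=\{0\}$, $H_i=\{\alpha_i=0\}$, $\alpha_i\in\mathbb{Z}[x_1,\dots,x_l]$ a nonzero linear form whose coefficients are not all divisible by any prime (so $\alpha_i,\alpha_j$ are not scalar multiples of one another for $i\ne j$). $(\alpha_i)_p$ is the reduction of $\alpha_i$ mod $p$. For a term ordering $\sigma$ and nonzero $f\in\mathbb{Z}[x_1,\dots,x_l]$, $\mathrm{LT}_\sigma(f)$ is the $\sigma$-largest term, $\mathrm{LC}_\sigma(f)$ its coefficient, $\mathrm{LM}_\sigma(f)=\mathrm{LC}_\sigma(f)\mathrm{LT}_\sigma(f)$. A minimal strong $\sigma$-Gröbner basis of an ideal $I\subseteq\mathbb{Z}[x_1,\dots,x_l]$ is a finite generating set $G$ of nonzero elements of $I$ such that every nonzero $f\in I$ has $\mathrm{LM}_\sigma(f)$ divisible by some $\mathrm{LM}_\sigma(g)$, $g\in G$, and no $\mathrm{LM}_\sigma(g)$ divides $\mathrm{LM}_\sigma(g')$ for distinct $g,g'\in G$;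 the set of leading coefficients is independent of the choice. $p$ is $\sigma$-lucky for $I$ if $p$ divides none of these leading coefficients. *)

(* Defs.v *)
From HB Require Import structures.
From mathcomp Require Import all_boot all_order all_algebra.
From mathcomp Require Import mpoly.
Set Implicit Arguments.
Unset Strict Implicit.
Unset Printing Implicit Defensive.
Import Order.TTheory GRing.Theory Num.Theory.
Local Open Scope ring_scope.

Record termOrder (l : nat) := TermOrder {
  tord : rel 'X_{1..l};
  tord_refl : reflexive tord;
  tord_anti : antisymmetric tord;
  tord_trans : transitive tord;
  tord_total : total tord;
  tord_mul : forall m1 m2 m, tord m1 m2 -> tord (m1 + m)%MM (m2 + m)%MM;
  tord_ge0 : forall m, tord 0%MM m }.

Section GB.
Variables (l : nat) (sigma : termOrder l).

(* exponent of the sigma-largest term LT_sigma(f) (for f != 0) *)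
Definition LTexp (f : {mpoly int[l]}) : 'X_{1..l} :=
  foldr (fun m acc => if tord sigma acc m then m else acc) 0%MM (msupp f).

Definition LC (f : {mpoly int[l]}) : int := f@_(LTexp f).

Definition LM_dvd (g f : {mpoly int[l]}) : bool :=
  (LTexp g <= LTexp f)%MM && (LC g %| LC f)%Z.

Definition in_ideal (gs : seq {mpoly int[l]}) (f : {mpoly int[l]}) : Prop :=
  exists c : 'I_(size gs) -> {mpoly int[l]},
    f = \sum_(k < size gs) c k * gs`_k.

Definition min_strong_GB (I : {mpoly int[l]} -> Prop) (G : seq {mpoly int[l]})
  : Prop :=
  [/\ (forall g, g \in G -> g != 0 /\ I g),
      (forall f, I f -> in_ideal G f),
      (forall f, I f -> f != 0 -> exists2 g, g \in G & LM_dvd g f)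
    & (forall g g', g \in G -> g' \in G -> g != g' -> ~~ LM_dvd g g')].

(* p is sigma-lucky for I: p divides none of the leading coefficients of a
   minimal strong sigma-Groebner basis of I (these are independent of the
   choice of basis). *)
Definition lucky (p : nat) (I : {mpoly int[l]} -> Prop) : Prop :=
  exists G, min_strong_GB I G /\ forall g, g \in G -> ~~ (p%:Z %| LC g)%Z.

End GB.

(* Standing assumptions on the arrangement A = {H_1,...,H_n}, H_i = {alpha_i = 0}
   in Q^l: alpha_i nonzero integral linear forms with coprime coefficients,
   pairwise not scalar multiples (distinct hyperplanes), and
   \bigcap H_i = {0} (central and essential). *)
Definition lin_form (l : nat) (a : {mpoly int[l]}) : Prop :=
  forall m, m \in msupp a -> mdeg m = 1%N.

Definition arrangement (l n : nat) (alpha : 'I_n -> {mpoly int[l]}) : Prop :=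
  [/\ (forall i, alpha i != 0 /\ lin_form (alpha i)),
      (forall i q, prime q -> ~ (forall m, (q%:Z %| (alpha i)@_m)%Z)),
      (forall i j, i != j -> forall c d : int,
          c *: alpha i = d *: alpha j -> c = 0 /\ d = 0)
    & (forall x : 'I_l -> rat,
          (forall i, (map_mpoly (fun z : int => z%:~R : rat) (alpha i)).@[x] = 0) ->
          forall k, x k = 0)].

Definition redp (p l : nat) (f : {mpoly int[l]}) : {mpoly 'F_p[l]} :=
  map_mpoly (fun z : int => z%:~R : 'F_p) f.

(* Main.v *)
Require Import Defs.
From HB Require Import structures.
From mathcomp Require Import all_boot all_order all_algebra.
From mathcomp Require Import mpoly zify ring.
Import GRing.Theory.
Local Open Scope ring_scope.

Lemma mle_deg1 {l} {m t : 'X_{1..l}} : (m <= t)%MM -> (mdeg t <= 1)%N -> m = 0%MM \/ m = t.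
Proof.
move=> mt; rewrite -(submK mt) mdegD.
case E: (mdeg (t - m)) => [|k].
  by move/eqP: E; rewrite mdeg_eq0 => /eqP ->; rewrite add0m; right.
move=> H; left; apply/eqP; rewrite -mdeg_eq0; apply/eqP; lia.
Qed.

Lemma coefMX {l} (c : {mpoly int[l]}) m t : mdeg m = 1%N -> (mdeg t <= 1)%N ->
  (c * 'X_[m])@_t = c@_0%MM * (m == t)%:R.
Proof.
move=> dm dt; case mt: (m <= t)%MM.
  case: (mle_deg1 mt dt) => [m0|<-].
    by move: dm; rewrite m0 mdeg0.
  by rewrite -{1}(addm0 m) mcoeffMX eqxx mulr1.
have -> : (m == t) = false by apply: contraFF mt => /eqP ->; exact: lepm_refl.
rewrite mulr0; apply/eqP; apply: contraFT mt; rewrite -mcoeff_msupp.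
rewrite (perm_mem (msuppMX c m)) => /mapP [m' _ ->].
by apply/mnm_lepP => k; rewrite mnmDE leq_addr.
Qed.

Lemma coefMlin {l} (c a : {mpoly int[l]}) t : lin_form a -> (mdeg t <= 1)%N ->
  (c * a)@_t = c@_0%MM * a@_t.
Proof.
move=> la dt.
rewrite {1}(mpolyE a) big_distrr /= raddf_sum /=.
rewrite [in RHS](mpolyE a) raddf_sum big_distrr /=.
apply: eq_big_seq => m ms.
rewrite -scalerAr !mcoeffZ (coefMX _ _ _ (la _ ms) dt) mcoeffX; ring.
Qed.

Lemma ideal_lin {l} (a b f : {mpoly int[l]}) : lin_form a -> lin_form b ->
  in_ideal [:: a; b] f ->
  exists x y : int, forall t, (mdeg t <= 1)%N -> f@_t = (x *: a + y *: b)@_t.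
Proof.
move=> la lb [c ->]; rewrite /= big_ord_recl big_ord_recl big_ord0 addr0 /=.
eexists; eexists => t dt.
by rewrite mcoeffD !coefMlin // mcoeffD !mcoeffZ.
Qed.

Lemma L_ideal {l} (a b : {mpoly int[l]}) (x y : int) :
  in_ideal [:: a; b] (x *: a + y *: b).
Proof.
exists (fun k => if val k == 0%N then x%:MP else y%:MP).
by rewrite /= big_ord_recl big_ord_recl big_ord0 addr0 /= !mul_mpolyC.
Qed.

Lemma Fp_int0 p (z : int) : prime p -> (z%:~R == 0 :> 'F_p) = (p%:Z %| z)%Z.
Proof.
move=> pp; rewrite dvdzE /=.
have ch := pchar_Fp pp.
case: z => n.
  by rewrite (dvdn_pcharf ch).
by rewrite NegzE mulrNz oppr_eq0 (dvdn_pcharf ch).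
Qed.
Section Helpers.
Context {l : nat} (sigma : termOrder l).

Lemma foldr_spec (s : seq 'X_{1..l}) :
  let r := foldr (fun m acc => if tord sigma acc m then m else acc) 0%MM s in
  (r = 0%MM \/ r \in s) /\ (forall m, m \in s -> tord sigma m r).
Proof.
elim: s => [|x s IH] /=; first by split; [left|].
case: IH => [Hr Hm].
set r := foldr _ _ s in Hr Hm *.
case: ifP => Hx.
  split; first by right; rewrite inE eqxx.
  move=> m; rewrite inE => /orP [/eqP->|ms]; first exact: tord_refl.
  exact: tord_trans (Hm _ ms) Hx.
split.
  by case: Hr => [->|Hr]; [left|right; rewrite inE Hr orbT].
move=> m; rewrite inE => /orP [/eqP->|ms]; last exact: Hm.
by case/orP: (tord_total sigma r x) => H; rewrite ?H // Hx in H.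
Qed.

Lemma LT_max (f : {mpoly int[l]}) m : m \in msupp f -> tord sigma m (LTexp sigma f).
Proof. by case: (foldr_spec (msupp f)) => _ H; apply: H. Qed.

Lemma LT_in (f : {mpoly int[l]}) : f != 0 -> LTexp sigma f \in msupp f.
Proof.
move=> f0; case: (foldr_spec (msupp f)) => [[H0|//] Hm].
rewrite /LTexp H0.
case E: (msupp f) => [|m0 s]; first by move/eqP: E; rewrite msupp_eq0 (negPf f0).
have m0s : m0 \in msupp f by rewrite E inE eqxx.
have := Hm _ m0s; rewrite H0 => H.
have -> : (0 = m0)%MM by apply: (@tord_anti _ sigma); rewrite H tord_ge0.
by rewrite inE eqxx.
Qed.

Lemma LT_uniq (f : {mpoly int[l]}) m : m \in msupp f ->
  (forall m', m' \in msupp f -> tord sigma m' m) -> LTexp sigma f = m.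
Proof.
move=> mf H; have f0 : f != 0 by apply: contraTneq mf => ->; rewrite msupp0.
apply: (@tord_anti _ sigma); rewrite H ?LT_max //; exact: LT_in.
Qed.

End Helpers.

Lemma lin0 {l} (a : {mpoly int[l]}) : lin_form a -> a@_0%MM = 0.
Proof.
move=> la; apply/eqP; apply: contraT => H.
by have := la 0%MM; rewrite mcoeff_msupp mdeg0 => /(_ H).
Qed.

Lemma claim l (sigma : termOrder l) (p : nat) (a b : {mpoly int[l]})
  (G : seq {mpoly int[l]}) :
  prime p -> lin_form a -> lin_form b ->
  min_strong_GB sigma (in_ideal [:: a; b]) G ->
  (forall g, g \in G -> ~~ (p%:Z %| LC sigma g)%Z) ->
  forall N (h : {mpoly int[l]}), lin_form h ->
   (#|[pred k : 'I_l | tord sigma U_(k)%MM (LTexp sigma h)]| < N)%N ->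
   (exists x y : int, p%:Z *: h = x *: a + y *: b) ->
   exists x y : int, h = x *: a + y *: b.
Proof.
move=> pp la lb [GB1 _ GB3 _] Gp N; elim: N => [//|N IH] h lh cN [x1 [y1 Ph]].
have [->|h0] := eqVneq h 0; first by exists 0, 0; rewrite !scale0r addr0.
set P := p%:Z in Ph *.
have P0 : P != 0 by rewrite /P eqz_nat -lt0n prime_gt0.
have suppP : forall m, (m \in msupp (P *: h)) = (m \in msupp h).
  by move=> m; rewrite !mcoeff_msupp mcoeffZ mulf_eq0 (negPf P0).
set m0 := LTexp sigma h.
have m0h := LT_in sigma _ h0.
have /mdeg1P [k /eqP Ek] : mdeg m0 == 1%N by rewrite lh.
have Ph0 : P *: h != 0.
  apply/eqP => /(congr1 (mcoeff m0)); rewrite mcoeffZ mcoeff0 => /eqP.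
  by rewrite mulf_eq0 (negPf P0) /=; apply/negP; rewrite -mcoeff_msupp.
have LTPh : LTexp sigma (P *: h) = m0.
  by apply: LT_uniq; [rewrite suppP | move=> m'; rewrite suppP; exact: LT_max].
have LCPh : LC sigma (P *: h) = P * LC sigma h by rewrite /LC LTPh mcoeffZ.
have IPh : in_ideal [:: a; b] (P *: h) by rewrite Ph; exact: L_ideal.
case: (GB3 _ IPh Ph0) => g gG /andP [mg dg].
case: (GB1 g gG) => g0 Ig.
have pg := Gp g gG.
case: (ideal_lin _ _ _ la lb Ig) => x [y Eg].
set ell := x *: a + y *: b in Eg.
have lell : lin_form ell.
  move=> m; rewrite mcoeff_msupp mcoeffD !mcoeffZ => H.
  case: (eqVneq a@_m 0) => Ha; last by apply: la; rewrite mcoeff_msupp.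
  rewrite Ha mulr0 add0r in H; apply: lb; rewrite mcoeff_msupp.
  by apply: contraNneq H => ->; rewrite mulr0.
have g00 : g@_0%MM = 0 by rewrite Eg ?mdeg0 // mcoeffD !mcoeffZ !lin0 // !mulr0 addr0.
rewrite LTPh Ek in mg.
have LTg : LTexp sigma g = U_(k)%MM.
  have d1 : (mdeg (U_(k)%MM : 'X_{1..l}) <= 1)%N by rewrite mdeg1.
  case: (mle_deg1 mg d1) => // E0.
  by have := LT_in sigma _ g0; rewrite E0 mcoeff_msupp g00 eqxx.
have LCg : LC sigma g = ell@_(U_(k)%MM) by rewrite /LC LTg Eg ?mdeg1.
have ellle : forall m, m \in msupp ell -> tord sigma m U_(k)%MM.
  move=> m mm; have dm := lell _ mm; rewrite -LTg; apply: LT_max.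
  by rewrite mcoeff_msupp Eg ?dm // -mcoeff_msupp.
have dvd : (LC sigma g %| LC sigma h)%Z.
  move: dg; rewrite LCPh !dvdzE abszM => dg.
  rewrite -(@Gauss_dvdr _ `|P|%N) //.
  rewrite coprime_sym prime_coprime //.
set q := (LC sigma h %/ LC sigma g)%Z.
have Hq : LC sigma h = q * LC sigma g by rewrite divzK.
set h' := h - q *: ell.
have h'k : h'@_(U_(k)%MM) = 0.
  by rewrite mcoeffB mcoeffZ -LCg -Ek -/(LC sigma h) Hq subrr.
have h'supp : forall m, m \in msupp h' -> tord sigma m U_(k)%MM /\ mdeg m = 1%N.
  move=> m; rewrite mcoeff_msupp mcoeffB mcoeffZ => H.
  case: (eqVneq h@_m 0) => Hh.
    rewrite Hh sub0r oppr_eq0 mulf_eq0 negb_or in H; case/andP: H => _ H.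
    rewrite -mcoeff_msupp in H; split; [exact: ellle | exact: lell].
  rewrite -mcoeff_msupp in Hh; split; [rewrite -Ek; exact: LT_max | exact: lh].
have lh' : lin_form h' by move=> m /h'supp [].
have Ph' : exists x y : int, P *: h' = x *: a + y *: b.
  exists (x1 - P * q * x), (y1 - P * q * y); apply/mpolyP => m.
  have := congr1 (mcoeff m) Ph.
  rewrite /h' /ell !(mcoeffB, mcoeffN, mcoeffD, mcoeffZ) => E.
  rewrite mulrBr E; ring.
have [E|h'0] := eqVneq h' 0.
  exists (q * x), (q * y); apply/mpolyP => m.
  have := congr1 (mcoeff m) E.
  rewrite /h' /ell !(mcoeffB, mcoeffN, mcoeffD, mcoeffZ, mcoeff0) => /eqP.
  rewrite subr_eq0 => /eqP ->; ring.
have Hpr : [pred j : 'I_l | tord sigma U_(j)%MM (LTexp sigma h')] \proper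
           [pred j : 'I_l | tord sigma U_(j)%MM m0].
  have LTh' := h'supp _ (LT_in sigma _ h'0).
  apply/properP; split.
    apply/subsetP => j; rewrite !inE => Hj; rewrite Ek.
    exact: tord_trans Hj LTh'.1.
  exists k; rewrite !inE; first by rewrite Ek; exact: tord_refl.
  apply/negP => Hk.
  have E : LTexp sigma h' = U_(k)%MM by apply: (@tord_anti _ sigma); rewrite Hk LTh'.1.
  by have := LT_in sigma _ h'0; rewrite E mcoeff_msupp h'k eqxx.
have [x2 [y2 Eh']] : exists x y : int, h' = x *: a + y *: b.
  apply: IH => //.
  by apply: leq_trans (proper_card Hpr) _; rewrite -ltnS.
exists (x2 + q * x), (y2 + q * y); apply/mpolyP => m.
have := congr1 (mcoeff m) Eh'.
rewrite /h' /ell !(mcoeffB, mcoeffN, mcoeffD, mcoeffZ) => /eqP.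
rewrite subr_eq => /eqP ->; ring.
Qed.

Theorem lemma6p1 (l n : nat) (alpha : 'I_n -> {mpoly int[l]})
  (sigma : termOrder l) (p : nat) (i j : 'I_n) :
  arrangement alpha -> prime p -> (i < j)%N ->
  (exists2 beta : 'F_p, beta != 0 & redp p (alpha i) = beta *: redp p (alpha j)) ->
  ~ lucky sigma p (in_ideal [:: alpha i; alpha j]).
Proof.
move=> [Hnz Hprim Hind Hess] pp ltij [beta b0 Hred] [G [GB Gp]].
have la : lin_form (alpha i) := (Hnz i).2.
have lb : lin_form (alpha j) := (Hnz j).2.
have ij : i != j by rewrite neq_ltn ltij.
set a := alpha i in la Hred GB Gp *.
set b := alpha j in lb Hred GB Gp *.
set P := p%:Z.
have P0 : P != 0 by rewrite /P eqz_nat -lt0n prime_gt0.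
set c := (nat_of_ord beta)%:Z.
have Hdiv : forall m, (P %| a@_m - c * b@_m)%Z.
  move=> m; rewrite -Fp_int0 // intrB intrM.
  have := congr1 (mcoeff m) Hred; rewrite /redp mcoeffZ !mcoeff_map_mpoly => ->.
  have -> : (c%:~R : 'F_p) = beta by exact: natr_Zp.
  by rewrite subrr.
set f := a - c *: b.
set h := \sum_(m <- msupp f) (f@_m %/ P)%Z *: 'X_[m].
have Ph : P *: h = f.
  rewrite scaler_sumr [RHS]mpolyE; apply: eq_bigr => m _.
  rewrite scalerA mulrC divzK // /f mcoeffB mcoeffZ; exact: Hdiv.
have lh : lin_form h.
  move=> m; rewrite mcoeff_msupp => H.
  have : f@_m != 0 by rewrite -Ph mcoeffZ mulf_eq0 negb_or P0 H.
  rewrite /f mcoeffB mcoeffZ.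
  case: (eqVneq a@_m 0) => Ha.
    rewrite Ha sub0r oppr_eq0 mulf_eq0 negb_or => /andP [_ Hb].
    by apply: lb; rewrite mcoeff_msupp.
  by move=> _; apply: la; rewrite mcoeff_msupp.
have Ph' : exists x y : int, P *: h = x *: a + y *: b.
  by exists 1, (- c); rewrite Ph /f scale1r scaleNr.
have [x [y Eh]] := claim _ _ _ _ _ _ pp la lb GB Gp _ h lh (ltnSn _) Ph'.
have E : (1 - P * x) *: a = (c + P * y) *: b.
  apply/mpolyP => m; have := congr1 (mcoeff m) Ph.
  rewrite Eh /f !(mcoeffB, mcoeffN, mcoeffD, mcoeffZ) => E.
  apply/eqP; rewrite -subr_eq0; apply/eqP.
  transitivity ((a@_m - c * b@_m) - P * (x * a@_m + y * b@_m)); first ring.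
  by rewrite E subrr.
have [H1 _] := Hind i j ij _ _ E.
have : (P %| 1)%Z.
  apply/dvdzP; exists x; rewrite mulrC; apply/eqP; rewrite -subr_eq0 H1.
  done.
by rewrite dvdzE /= dvdn1 => /eqP p1; move: pp; rewrite p1.
Qed.
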